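(* Let $U\in\mathbb{R}^{n\times a}$ and $\Pi\in\mathbb{R}^{n\times b}$ be such that the concatenation $[U\,|\,\Pi]$ has orthonormal columns, let $\alpha\in[0,1/7]$, and let $S\in\mathbb{R}^{k\times n}$ be an $\alpha$-distortion subspace embedding for $[U\,|\,\Pi]$. Let $M\in\mathbb{R}^{k\times k}$ be symmetric, let $P$ be the orthogonal projection onto the column space of $SU$, and $P^\perp=I-P$. Then for every nonzero $x\in\mathbb{R}^b$, $P^\perp S\Pi x\ne0$ and $$\left|\frac{(P^\perp S\Pi x)^TM(P^\perp S\Pi x)}{\|P^\perp S\Pi x\|^2}-\frac{(S\Pi x)^TM(S\Pi x)}{\|S\Pi x\|^2}\right|\le10\alpha\|M\|.$$
   Context: $S$ is an $\alpha$-distortion subspace embedding for $X\in\mathbb{R}^{n\times m}$ if $(1-\alpha)\|Xv\|^2\le\|SXv\|^2\le(1+\alpha)\|Xv\|^2$ for all $v\in\mathbb{R}^m$. $\|M\|$ is the operator norm. *)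

(* Defs.v *)
From HB Require Import structures.
From mathcomp Require Import all_boot all_order all_algebra.
From mathcomp Require Import boolp classical_sets reals.
Set Implicit Arguments. Unset Strict Implicit. Unset Printing Implicit Defensive.
Import Order.TTheory GRing.Theory Num.Theory.
Local Open Scope ring_scope.
Local Open Scope classical_set_scope.

Definition vnormsq (R : realType) (n : nat) (v : 'cV[R]_n) : R :=
  \sum_(i < n) v i 0 ^+ 2.

Definition vnorm (R : realType) (n : nat) (v : 'cV[R]_n) : R :=
  Num.sqrt (vnormsq v).

Definition opnorm (R : realType) (m n : nat) (M : 'M[R]_(m, n)) : R :=
  sup [set vnorm (M *m v) | v in [set v : 'cV[R]_n | vnorm v <= 1]].

Definition orthonormal_cols (R : realType) (n m : nat) (X : 'M[R]_(n, m)) :=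
  X^T *m X = 1%:M.

Definition subspace_embedding (R : realType) (k n m : nat) (alpha : R)
    (S : 'M[R]_(k, n)) (X : 'M[R]_(n, m)) :=
  forall v : 'cV[R]_m,
    (1 - alpha) * vnormsq (X *m v) <= vnormsq (S *m (X *m v)) /\
    vnormsq (S *m (X *m v)) <= (1 + alpha) * vnormsq (X *m v).

(* P is the orthogonal projection onto the column space of A:
   symmetric, idempotent, with the same column space as A
   (column spaces expressed as row spaces of transposes). *)
Definition orth_proj_onto (R : realType) (k a : nat)
    (P : 'M[R]_k) (A : 'M[R]_(k, a)) :=
  P^T = P /\ P *m P = P /\ (P^T == A^T)%MS.

Definition rayleigh (R : realType) (k : nat) (M : 'M[R]_k) (v : 'cV[R]_k) : R :=
  (v^T *m M *m v) 0 0 / vnormsq v.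

(* Main.v *)
Require Import Defs.
From HB Require Import structures.
From mathcomp Require Import all_boot all_order all_algebra.
From mathcomp Require Import boolp classical_sets reals.
From mathcomp Require Import ring lra.
Import Order.TTheory GRing.Theory Num.Theory.
Local Open Scope ring_scope.
Set Implicit Arguments. Unset Strict Implicit.

Section Aux.
Variable R : realType.

Definition dot (n : nat) (u v : 'cV[R]_n) : R := (u^T *m v) 0 0.

Lemma dotE n (u v : 'cV[R]_n) : dot u v = \sum_i u i 0 * v i 0.
Proof. by rewrite /dot mxE; apply: eq_bigr => i _; rewrite mxE. Qed.

Lemma vnormsqE n (v : 'cV[R]_n) : vnormsq v = dot v v.
Proof. by rewrite dotE /vnormsq; apply: eq_bigr => i _; rewrite expr2. Qed.

Lemma dotC n (u v : 'cV[R]_n) : dot u v = dot v u.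
Proof. by rewrite !dotE; apply: eq_bigr => i _; rewrite mulrC. Qed.

Lemma dotDl n (u v w : 'cV[R]_n) : dot (u + v) w = dot u w + dot v w.
Proof. by rewrite !dotE -big_split; apply: eq_bigr => i _; rewrite mxE mulrDl. Qed.

Lemma dotZl n c (u w : 'cV[R]_n) : dot (c *: u) w = c * dot u w.
Proof. by rewrite !dotE mulr_sumr; apply: eq_bigr => i _; rewrite mxE mulrA. Qed.

Lemma dotNl n (u w : 'cV[R]_n) : dot (- u) w = - dot u w.
Proof. by rewrite -scaleN1r dotZl mulN1r. Qed.

Lemma dotDr n (u v w : 'cV[R]_n) : dot w (u + v) = dot w u + dot w v.
Proof. by rewrite dotC dotDl !(dotC w). Qed.

Lemma dotZr n c (u w : 'cV[R]_n) : dot w (c *: u) = c * dot w u.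
Proof. by rewrite dotC dotZl dotC. Qed.

Lemma dotNr n (u w : 'cV[R]_n) : dot w (- u) = - dot w u.
Proof. by rewrite dotC dotNl dotC. Qed.

Lemma dot0r n (w : 'cV[R]_n) : dot w 0 = 0.
Proof. by rewrite dotE big1 // => i _; rewrite mxE mulr0. Qed.

Lemma dot_mulmx m n (A : 'M[R]_(m, n)) u v : dot (A *m u) v = dot u (A^T *m v).
Proof. by rewrite /dot trmx_mul mulmxA. Qed.

Lemma vnormsq_ge0 n (v : 'cV[R]_n) : 0 <= vnormsq v.
Proof. by apply: sumr_ge0 => i _; apply: sqr_ge0. Qed.

Lemma vnormsq_eq0 n (v : 'cV[R]_n) : vnormsq v = 0 -> v = 0.
Proof.
move=> h; apply/matrixP => i j; rewrite ord1 mxE.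
have := @psumr_eq0P _ _ predT (fun i => v i 0 ^+ 2) (fun i _ => sqr_ge0 (v i 0)) h i isT.
by move/eqP; rewrite sqrf_eq0 => /eqP.
Qed.

Lemma CS n (u v : 'cV[R]_n) : dot u v ^+ 2 <= vnormsq u * vnormsq v.
Proof.
have [v0|vn0] := eqVneq v 0.
  by rewrite v0 dot0r expr0n /= mulr_ge0 // vnormsq_ge0.
have Vp : 0 < vnormsq v.
  rewrite lt_def vnormsq_ge0 andbT; apply/eqP => h; move/eqP: vn0; apply.
  exact: vnormsq_eq0.
have := vnormsq_ge0 (vnormsq v *: u - dot u v *: v).
rewrite vnormsqE !(dotDl, dotDr, dotNl, dotNr, dotZl, dotZr) -!vnormsqE (dotC v u).
move=> h.
have : 0 <= vnormsq v * (vnormsq u * vnormsq v - dot u v ^+ 2) by nra.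
rewrite pmulr_rge0 // subr_ge0 //.
Qed.

Lemma CSs n (u v : 'cV[R]_n) : `|dot u v| <= vnorm u * vnorm v.
Proof.
rewrite /vnorm -sqrtrM ?vnormsq_ge0 // -sqrtr_sqr ler_sqrt ?CS //.
by rewrite mulr_ge0 // vnormsq_ge0.
Qed.

Lemma vnormsqZ n c (v : 'cV[R]_n) : vnormsq (c *: v) = c ^+ 2 * vnormsq v.
Proof. by rewrite !vnormsqE dotZl dotZr mulrA expr2. Qed.

Lemma vnorm_ge0 n (v : 'cV[R]_n) : 0 <= vnorm v.
Proof. exact: sqrtr_ge0. Qed.

Lemma vnorm_sq n (v : 'cV[R]_n) : vnorm v ^+ 2 = vnormsq v.
Proof. by rewrite sqr_sqrtr // vnormsq_ge0. Qed.


Lemma mulmx_entry m n (A : 'M[R]_(m, n)) v i : (A *m v) i 0 = dot (row i A)^T v.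
Proof. by rewrite /dot trmxK -row_mul [RHS]mxE. Qed.

Lemma vnormsq_mul_bound m n (A : 'M[R]_(m, n)) v :
  vnormsq (A *m v) <= (\sum_i vnormsq (row i A)^T) * vnormsq v.
Proof.
rewrite /vnormsq mulr_suml; apply: ler_sum => i _.
rewrite mulmx_entry; exact: CS.
Qed.

Lemma opnorm_bound m n (A : 'M[R]_(m, n)) v :
  vnorm (A *m v) <= opnorm A * vnorm v.
Proof.
set E := ([set vnorm (A *m v) | v in [set v : 'cV[R]_n | vnorm v <= 1]])%classic.
set K := \sum_i vnormsq (row i A)^T.
have K0 : 0 <= K by apply: sumr_ge0 => i _; apply: vnormsq_ge0.
have ubE : has_ubound E.
  exists (Num.sqrt K). move=> r [w /= hw <-].
  rewrite /vnorm ler_sqrt //.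
  apply: (le_trans (vnormsq_mul_bound A w)).
  rewrite ler_piMr //.
  have : vnorm w ^+ 2 <= 1 by rewrite -(expr1n _ 2) lerXn2r // ?nnegrE ?vnorm_ge0.
  by rewrite vnorm_sq.
have [->|vn0] := eqVneq v 0.
  by rewrite mulmx0 /vnorm !vnormsqE !dot0r sqrtr0 mulr0.
have Np : 0 < vnorm v.
  rewrite lt_def vnorm_ge0 andbT sqrtr_eq0 -ltNge lt_def vnormsq_ge0 andbT.
  by apply/eqP => /vnormsq_eq0 h; rewrite h eqxx in vn0.
have h1 : E (vnorm (A *m ((vnorm v)^-1 *: v))).
  exists ((vnorm v)^-1 *: v) => //=.
  rewrite /vnorm vnormsqZ sqrtrM ?sqr_ge0 // sqrtr_sqr -/(vnorm v).
  by rewrite ger0_norm ?invr_ge0 ?vnorm_ge0 // mulVf // gt_eqF.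
have := ub_le_sup ubE h1.
rewrite -/(opnorm A) -scalemxAr /vnorm vnormsqZ sqrtrM ?sqr_ge0 // sqrtr_sqr -!/(vnorm _).
rewrite ger0_norm ?invr_ge0 ?vnorm_ge0 //.
by rewrite ler_pdivrMl // mulrC.
Qed.


Lemma vnormsq_col m1 m2 (c : 'cV[R]_m1) (d : 'cV[R]_m2) :
  vnormsq (col_mx c d) = vnormsq c + vnormsq d.
Proof. by rewrite /vnormsq big_split_ord /=; congr (_ + _); apply: eq_bigr => i _;
  rewrite ?col_mxEu ?col_mxEd. Qed.

Lemma quadE n (M : 'M[R]_n) v : (v^T *m M *m v) 0 0 = dot v (M *m v).
Proof. by rewrite /dot mulmxA. Qed.

Lemma vnormsqD n (u v : 'cV[R]_n) :
  vnormsq (u + v) = vnormsq u + 2 * dot u v + vnormsq v.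
Proof. rewrite !vnormsqE dotDl !dotDr (dotC v u); ring. Qed.

Lemma sq_le (a b : R) : 0 <= a -> 0 <= b -> a ^+ 2 <= b ^+ 2 -> a <= b.
Proof. move=> ha hb h; rewrite leNgt; apply/negP => hlt; nra. Qed.

Lemma quad_bound n (M : 'M[R]_n) u v :
  `|dot u (M *m v)| <= opnorm M * (vnorm u * vnorm v).
Proof.
apply: (le_trans (CSs _ _)).
rewrite mulrCA ler_wpM2l ?vnorm_ge0 //; exact: opnorm_bound.
Qed.

End Aux.

Unset Implicit Arguments.

Theorem mainTheorem13 (R : realType) (n a b k : nat)
    (U : 'M[R]_(n, a)) (Pi : 'M[R]_(n, b)) (alpha : R)
    (S : 'M[R]_(k, n)) (M : 'M[R]_k) (P : 'M[R]_k) :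
  orthonormal_cols (row_mx U Pi) ->
  0 <= alpha -> alpha <= 1 / 7 ->
  subspace_embedding alpha S (row_mx U Pi) ->
  M^T = M ->
  orth_proj_onto P (S *m U) ->
  forall x : 'cV[R]_b, x != 0 ->
    let y := (1%:M - P) *m (S *m (Pi *m x)) in
    y != 0 /\
    `| rayleigh M y - rayleigh M (S *m (Pi *m x)) | <= 10 * alpha * opnorm M.
Proof.
move=> hO ha0 ha7 hE hM [hPs [hPP hPA]] x xn0 y.
set w := S *m (Pi *m x).
set z := P *m w.
have yE : y = w - z by rewrite /y mulmxBl mul1mx.
have iso : forall v, vnormsq (row_mx U Pi *m v) = vnormsq v.
  move=> v; rewrite !vnormsqE dot_mulmx mulmxA.
  by move: hO; rewrite /orthonormal_cols => ->; rewrite mul1mx.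
case/andP: hPA => /submxP [D hD] _.
have PE : P = (S *m U) *m D^T by rewrite -[P]trmxK hD trmx_mul trmxK.
set c := D^T *m w.
have zE : z = S *m (U *m c) by rewrite /z PE /c !mulmxA.
have dzz : dot z z = dot z w.
  rewrite {1 2}/z dot_mulmx mulmxA hPs hPP dotC.
  done.
have dzy : dot z y = 0 by rewrite yE dotDr dotNr dzz subrr.
set Z := vnormsq z. set W := vnormsq w. set Y := vnormsq y.
set Cn := vnormsq c. set Xn := vnormsq x.
have emb : forall s t : R,
    ((1 - alpha) * (s ^+ 2 * Cn + t ^+ 2 * Xn) <= s ^+ 2 * Z + 2 * s * t * Z + t ^+ 2 * W) /\ 
    (s ^+ 2 * Z + 2 * s * t * Z + t ^+ 2 * W <= (1 + alpha) * (s ^+ 2 * Cn + t ^+ 2 * Xn)).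
  move=> s t; have [h1 h2] := hE (col_mx (s *: c) (t *: x)).
  have e1 : S *m (row_mx U Pi *m col_mx (s *: c) (t *: x)) = s *: z + t *: w.
    by rewrite mul_row_col mulmxDr -!scalemxAr zE.
  have e2 : vnormsq (s *: z + t *: w) = s ^+ 2 * Z + 2 * s * t * Z + t ^+ 2 * W.
    rewrite vnormsqD !vnormsqZ dotZl dotZr -dzz -vnormsqE -/Z /W; ring.
  move: h1 h2; rewrite e1 e2 iso vnormsq_col !vnormsqZ => h1 h2; split; [exact: h1 | exact: h2].
have WY : W = Y + Z.
  by rewrite /W (_ : w = y + z) ?vnormsqD ?(dotC y) ?dzy ?mulr0 ?addr0 // yE subrK.
have Z0 : 0 <= Z := vnormsq_ge0 _.
have Y0 : 0 <= Y := vnormsq_ge0 _.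
have C0 : 0 <= Cn := vnormsq_ge0 _.
have Xp : 0 < Xn.
  rewrite lt_def vnormsq_ge0 andbT; apply/eqP => /vnormsq_eq0 h.
  by rewrite h eqxx in xn0.
have [e01 _] := emb 0 1.
have [e10 _] := emb 1 0.
have a1 : 0 < 1 - alpha by lra.
have XW : (1 - alpha) * Xn <= W by move: e01; rewrite expr0n expr1n /=; lra.
have Wp : 0 < W by nra.
have CZ : (1 - alpha) * Cn <= Z by move: e10; rewrite expr0n expr1n /=; lra.
have key : forall s t, 2 * (1 - alpha) * s * t * Z <= alpha * (s ^+ 2 * Z + t ^+ 2 * W).
  move=> s t; have [_ u1] := emb s t; have [l1 _] := emb s (- t).
  have h4 : 4 * s * t * Z <= 2 * alpha * (s ^+ 2 * Cn + t ^+ 2 * Xn).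
    move: u1 l1; rewrite sqrrN; lra.
  have h5 := ler_wpM2l (ltW a1) h4.
  have d1 : 0 <= Z - (1 - alpha) * Cn by lra.
  have d2 : 0 <= W - (1 - alpha) * Xn by lra.
  have := mulr_ge0 (mulr_ge0 ha0 (sqr_ge0 s)) d1.
  have := mulr_ge0 (mulr_ge0 ha0 (sqr_ge0 t)) d2.
  nra.
set sz := vnorm z. set sw := vnorm w. set sy := vnorm y.
have Zs : Z = sz ^+ 2 by rewrite vnorm_sq.
have Ws : W = sw ^+ 2 by rewrite vnorm_sq.
have Ys : Y = sy ^+ 2 by rewrite vnorm_sq.
have sz0 : 0 <= sz := vnorm_ge0 _.
have sw0 : 0 <= sw := vnorm_ge0 _.
have sy0 : 0 <= sy := vnorm_ge0 _.
have hz : sz * (1 - alpha) <= alpha * sw.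
  have [a0|ap] := eqVneq alpha 0.
    have := key 1 1; rewrite a0 => h.
    have : sz ^+ 2 <= 0 by nra.
    nra.
  have ap' : 0 < alpha by rewrite lt_def ap ha0.
  have := key (alpha * W) ((1 - alpha) * Z) => h.
  have h2 : alpha * W * ((1 - alpha) ^+ 2 * Z ^+ 2 - alpha ^+ 2 * W * Z) <= 0 by nra.
  have h3 : (1 - alpha) ^+ 2 * Z ^+ 2 - alpha ^+ 2 * W * Z <= 0.
    by rewrite -(pmulr_rle0 _ (mulr_gt0 ap' Wp)).
  apply: sq_le; [nra | nra |].
  have [z0|zp] := eqVneq sz 0.
    by rewrite z0 mul0r expr0n /= sqr_ge0.
  have szp : 0 < sz by rewrite lt_def zp sz0.
  rewrite Zs Ws in h3.
  have h4 : sz ^+ 2 * ((sz * (1 - alpha)) ^+ 2 - (alpha * sw) ^+ 2) <= 0 by nra.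
  rewrite pmulr_rle0 ?exprn_gt0 // in h4; lra.
have Yp : 0 < Y.
  rewrite lt_def Y0 andbT; apply/eqP => Y00.
  have e : sw = sz by apply/eqP; rewrite eq_le; apply/andP; split; apply: sq_le => //; nra.
  have h : sz * (1 - 2 * alpha) <= 0 by rewrite e in hz; nra.
  rewrite pmulr_lle0 in h; last by lra.
  have : sz = 0 by apply/eqP; rewrite eq_le h sz0.
  move=> sz00; move: Wp; rewrite Ws e sz00; rewrite expr0n ltxx //.
have yn0 : y != 0.
  by apply/eqP => y0; move: Yp; rewrite /Y y0 vnormsqE dot0r ltxx.
split => //.
set m := opnorm M.
set Qy := dot y (M *m y). set Qz := dot z (M *m z). set B := dot y (M *m z).
have hQw : dot w (M *m w) = Qy + 2 * B + Qz.
  have wE : w = y + z by rewrite yE subrK.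
  have e : dot z (M *m y) = B by rewrite dotC dot_mulmx hM.
  rewrite wE mulmxDr !dotDl !dotDr -/Qy -/Qz -/B e; ring.
have bQy := quad_bound M y y.
have bQz := quad_bound M z z.
have bB := quad_bound M y z.
rewrite -/Qy -/sy in bQy; rewrite -/Qz -/sz in bQz; rewrite -/B -/sy -/sz in bB.
have m0 : 0 <= m.
  have : 0 <= m * (sy * sy) by apply: le_trans bQy.
  have syp : 0 < sy by rewrite lt_def sy0 andbT sqrtr_eq0 -ltNge.
  by rewrite pmulr_lge0 // mulr_gt0.
rewrite /rayleigh !quadE -/Qy -/Y hQw -/W.
have eq : Qy / Y - (Qy + 2 * B + Qz) / W = (Qy * Z - (2 * B + Qz) * Y) / (Y * W).
  rewrite WY; field; apply/andP; split; rewrite gt_eqF //; lra.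
have YW : 0 < Y * W by rewrite mulr_gt0.
rewrite eq normrM normfV (gtr0_norm YW) ler_pdivrMr //.
move: bQy bQz bB; rewrite !ler_norml => /andP[q1 q2] /andP[q3 q4] /andP[q5 q6].
have arith : 2 * Z + 2 * (sy * sz) <= 10 * alpha * W.
  have h1 : sz * 6 <= 7 * alpha * sw by nra.
  have h2 : 36 * sz ^+ 2 <= 49 * alpha ^+ 2 * sw ^+ 2.
    have d : 0 <= 7 * alpha * sw - sz * 6 by lra.
    have := mulr_ge0 d (addr_ge0 (mulr_ge0 (mulr_ge0 (ler0n _ 7) ha0) sw0) (mulr_ge0 sz0 (ler0n _ 6))).
    nra.
  have h3 : sy <= sw by apply: sq_le => //; lra.
  have h4 : sy * (sz * 6) <= sw * (7 * alpha * sw) by apply: ler_pM => //; nra.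
  have h5 : 0 <= alpha * (1 / 7 - alpha) * W by apply: mulr_ge0; [nra | lra].
  nra.
have ey : sy * sy = Y by rewrite Ys expr2.
have ez : sz * sz = Z by rewrite Zs expr2.
rewrite ey in q1 q2; rewrite ez in q3 q4.
rewrite -/m in q1 q2 q3 q4 q5 q6.
have k1 : 0 <= (m * Y - Qy) * Z by apply: mulr_ge0 => //; lra.
have k2 : 0 <= (m * Y + Qy) * Z by apply: mulr_ge0 => //; lra.
have k3 : 0 <= (m * (sy * sz) - B) * Y by apply: mulr_ge0 => //; lra.
have k4 : 0 <= (m * (sy * sz) + B) * Y by apply: mulr_ge0 => //; lra.
have k5 : 0 <= (m * Z - Qz) * Y by apply: mulr_ge0 => //; lra.
have k6 : 0 <= (m * Z + Qz) * Y by apply: mulr_ge0 => //; lra.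
have k7 : 0 <= m * Y * (10 * alpha * W - (2 * Z + 2 * (sy * sz))).
  by apply: mulr_ge0; [apply: mulr_ge0 => //; lra | lra].
apply/andP; split; nra.
Qed.
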